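(* Let $\mathcal{D}$ be a $\{K_3,K_4\}$-decomposition of $K_{18}$ with $\alpha=13$, let $W$ be the set of vertices $x$ with $\alpha_x\ge 2$, and for $i\in\{0,1,2,3\}$ let $t_i$ be the number of copies of $K_3$ in $\mathcal{D}$ having exactly $i$ vertices in $W$. Then $(t_0,t_1,t_2,t_3)\neq(1,0,8,4)$.
   Context: A $\{K_3,K_4\}$-decomposition of $K_v$ is a collection of subgraphs, each isomorphic to $K_3$ or $K_4$, such that every edge of $K_v$ lies in exactly one of them. $\alpha$ is the number of copies of $K_3$ in the decomposition, and for a vertex $x$, $\alpha_x$ is the number of copies of $K_3$ in the decomposition containing $x$. *)

(* Defs.v *)
From mathcomp Require Import all_boot.
Set Implicit Arguments. Unset Strict Implicit. Unset Printing Implicit Defensive.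

(* A {K3,K4}-decomposition of K_v, with vertex set 'I_v, given as a list of
   blocks (vertex sets of the K3/K4 copies). *)
Definition is_K34_decomposition (v : nat) (D : seq {set 'I_v}) : Prop :=
  (forall B, B \in D -> (#|B| == 3) || (#|B| == 4)) /\
  (forall x y : 'I_v, x != y -> count (fun B : {set 'I_v} => (x \in B) && (y \in B)) D = 1).

Definition alpha (v : nat) (D : seq {set 'I_v}) : nat :=
  count (fun B : {set 'I_v} => #|B| == 3) D.

Definition alpha_x (v : nat) (D : seq {set 'I_v}) (x : 'I_v) : nat :=
  count (fun B : {set 'I_v} => (#|B| == 3) && (x \in B)) D.

Definition Wset (v : nat) (D : seq {set 'I_v}) : {set 'I_v} :=
  [set x | 2 <= alpha_x D x].

Definition t_count (v : nat) (D : seq {set 'I_v}) (i : nat) : nat :=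
  count (fun B : {set 'I_v} => (#|B| == 3) && (#|B :&: Wset D| == i)) D.

(* Main.v *)
Require Import Defs.
From mathcomp Require Import all_boot.
From mathcomp Require Import zify.
Set Implicit Arguments. Unset Strict Implicit. Unset Printing Implicit Defensive.

Lemma count_sum (T : Type) (a : pred T) (s : seq T) :
  count a s = \sum_(x <- s) (a x : nat).
Proof. by elim: s => [|y s IH]; rewrite ?big_nil ?big_cons //= IH. Qed.

Section Main.
Variable D : seq {set 'I_18}.

Lemma sum_eqD (F G : {set 'I_18} -> nat) :
  (forall B, B \in D -> F B = G B) -> \sum_(B <- D) F B = \sum_(B <- D) G B.
Proof. by move=> H; rewrite big_seq [RHS]big_seq; apply: eq_bigr. Qed.

Lemma sum_leD (F G : {set 'I_18} -> nat) :
  (forall B, B \in D -> F B <= G B) -> \sum_(B <- D) F B <= \sum_(B <- D) G B.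
Proof. by move=> H; rewrite big_seq [X in _ <= X]big_seq; apply: leq_sum. Qed.

Lemma card_sum (S B : {set 'I_18}) : \sum_(x in S) ((x \in B) : nat) = #|B :&: S|.
Proof.
rewrite -(@eq_bigr _ _ _ _ _ _ (fun x => if x \in B then 1 else 0)); last by move=> i _; case: (i \in B).
rewrite -big_mkcondr sum1_card; apply: eq_card => x; by rewrite !inE andbC.
Qed.

Lemma gen (S : {set 'I_18}) (f : {set 'I_18} -> nat) :
  \sum_(x in S) \sum_(B <- D) ((x \in B) * f B) = \sum_(B <- D) #|B :&: S| * f B.
Proof.
rewrite exchange_big /=; apply: eq_bigr => B _.
by rewrite -big_distrl /= card_sum.
Qed.


Hypothesis Hsz : forall B, B \in D -> (#|B| == 3) || (#|B| == 4).
Hypothesis Hpair : forall x y : 'I_18, x != y ->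
  count (fun B : {set 'I_18} => (x \in B) && (y \in B)) D = 1.

Definition c3 (B : {set 'I_18}) : nat := (#|B| == 3).
Definition c4 (B : {set 'I_18}) : nat := (#|B| == 4).
Definition ax (x : 'I_18) := \sum_(B <- D) ((x \in B) * c3 B).
Definition kx (x : 'I_18) := \sum_(B <- D) ((x \in B) * c4 B).

Lemma cnt_off x y : x != y -> \sum_(B <- D) ((x \in B) * (y \in B)) = 1.
Proof.
move=> xy; have := Hpair xy; rewrite count_sum => H; rewrite -[RHS]H; apply: eq_bigr => B _; by rewrite mulnb.
Qed.

Lemma row (S : {set 'I_18}) x : x \in S ->
  \sum_(y in S) \sum_(B <- D) ((y \in B) * (x \in B)) = \sum_(B <- D) ((x \in B) : nat) + (#|S| - 1).
Proof.
move=> xS; rewrite (bigD1 x) //=; congr (_ + _).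
  by apply: eq_bigr => B _; case: (x \in B).
rewrite (cardsD1 x S) xS add1n subn1 /=.
rewrite (eq_bigr (fun _ => 1)); last by move=> y /andP[_ yx]; apply: cnt_off.
rewrite -sum1_card; apply: eq_bigl => i; by rewrite !inE andbC.
Qed.

Lemma rx x : \sum_(B <- D) ((x \in B) : nat) = ax x + kx x.
Proof.
rewrite /ax /kx -big_split; apply: sum_eqD => B /Hsz.
by rewrite /c3 /c4; case/orP => /eqP ->; case: (x \in B).
Qed.

Lemma P1 x : 2 * ax x + 3 * kx x = 17.
Proof.
have := gen setT (fun B => (x \in B) : nat).
rewrite row ?inE // cardsT card_ord rx.
have -> : \sum_(B <- D) #|B :&: setT| * (x \in B) = 3 * ax x + 4 * kx x.
  rewrite /ax /kx !big_distrr -big_split; apply: sum_eqD => B /Hsz.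
  by rewrite setIT /c3 /c4; case/orP => /eqP ->; case: (x \in B).
lia.
Qed.

Definition mW (B : {set 'I_18}) := #|B :&: Wset D|.
Definition tt (i : nat) := \sum_(B <- D) (((#|B| == 3) && (mW B == i)) : nat).

Lemma sum_lin_W (S : {set 'I_18}) :
  \sum_(x in S) (2 * ax x + 3 * kx x) = 2 * \sum_(x in S) ax x + 3 * \sum_(x in S) kx x.
Proof. by rewrite big_split /= -!big_distrr. Qed.

Lemma main13 : alpha D = 13 -> tt 1 = 0 -> tt 2 = 8 -> tt 3 = 4 -> False.
Proof.
move=> Hal T1 T2 T3.
set W := Wset D.
have N3 : \sum_(B <- D) c3 B = 13 by move: Hal; rewrite /alpha count_sum.
have HaW : \sum_(x in W) ax x = tt 1 + 2 * tt 2 + 3 * tt 3.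
  rewrite /ax gen /tt !big_distrr -!big_split; apply: sum_eqD => B /Hsz _.
  have : mW B <= #|B| by apply: subset_leq_card; apply: subsetIl.
  rewrite /c3 -/(mW B); case: (#|B| == 3) /eqP => [->|_]; last by rewrite !muln0 !andFb.
  by case: (mW B) => [|[|[|[|n]]]].
have HkW : \sum_(x in W) kx x = \sum_(B <- D) mW B * c4 B by rewrite /kx gen.
have HaT : \sum_(x in setT) ax x = 39.
  rewrite /ax gen; transitivity (3 * \sum_(B <- D) c3 B); last by rewrite N3.
  rewrite big_distrr; apply: sum_eqD => B /Hsz.
  by rewrite setIT /c3; case/orP => /eqP ->.
have HkT : \sum_(x in setT) kx x = 4 * \sum_(B <- D) c4 B.
  rewrite /kx gen big_distrr; apply: sum_eqD => B /Hsz.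
  by rewrite setIT /c4; case/orP => /eqP ->.
have HQ : \sum_(B <- D) mW B * mW B = \sum_(x in W) ax x + \sum_(x in W) kx x + #|W| * (#|W| - 1).
  rewrite -gen.
  transitivity (\sum_(x in W) \sum_(y in W) \sum_(B <- D) ((y \in B) * (x \in B))).
    apply: eq_bigr => x _; rewrite gen; apply: eq_bigr => B _; by rewrite mulnC.
  rewrite (eq_bigr (fun x => \sum_(B <- D) ((x \in B) : nat) + (#|W| - 1))); last by move=> x xW; apply: row.
  by rewrite big_split /= sum_nat_const (eq_bigr _ (fun x _ => rx x)) big_split.
have PW : 2 * \sum_(x in W) ax x + 3 * \sum_(x in W) kx x = 17 * #|W|.
  by rewrite -sum_lin_W (eq_bigr _ (fun x _ => P1 x)) sum_nat_const mulnC.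
have PT : 2 * \sum_(x in setT) ax x + 3 * \sum_(x in setT) kx x = 17 * 18.
  by rewrite -sum_lin_W (eq_bigr _ (fun x _ => P1 x)) sum_nat_const cardsT card_ord mulnC.
have Hsplit : \sum_(x in setT) ax x = \sum_(x in W) ax x + \sum_(x in ~: W) ax x.
  by rewrite (big_setID W) setTI setTD.
have LN : #|~: W| <= \sum_(x in ~: W) ax x.
  rewrite -sum1_card; apply: leq_sum => x _; have := P1 x; lia.
have LW : 4 * #|W| <= \sum_(x in W) ax x.
  rewrite mulnC -sum_nat_const; apply: leq_sum => x; rewrite inE => h.
  have : alpha_x D x = ax x.
    rewrite /alpha_x count_sum /ax; apply: eq_bigr => B _; by rewrite mulnb andbC.
  move=> e; rewrite e in h; have := P1 x; lia.
have HC := cardsC W; rewrite card_ord in HC.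
have Ineq : 3 * \sum_(B <- D) (mW B * c4 B) + tt 1 + 4 * tt 2 + 9 * tt 3
    <= \sum_(B <- D) (mW B * mW B) + 2 * \sum_(B <- D) c4 B.
  rewrite /tt !big_distrr -!big_split /=.
  apply: sum_leD => B /Hsz H34.
  have : mW B <= #|B| by apply: subset_leq_card; apply: subsetIl.
  rewrite /c4; case/orP: H34 => /eqP ->.
    by case: (mW B) => [|[|[|[|n]]]].
  rewrite muln1 /=; case: (mW B) => [|[|[|[|n]]]] //= _; lia.
idtac.
have w7 : #|W| = 7 by lia.
rewrite w7 in HQ PW; lia.
Qed.

End Main.

Theorem mainTheorem14 (D : seq {set 'I_18}) :
  is_K34_decomposition D -> alpha D = 13 ->
  (t_count D 0, t_count D 1, t_count D 2, t_count D 3) <> (1, 0, 8, 4).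
Proof.
move=> [Hsz Hpair] Hal [] _ T1 T2 T3.
have e i : t_count D i = tt D i by rewrite /t_count count_sum.
rewrite !e in T1 T2 T3.
exact: (main13 Hsz Hpair Hal T1 T2 T3).
Qed.
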